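(* Fix integers $k \ge 3$ and $i \in \{2,\dots,k-1\}$, and let $T = \{1,\dots,k\}\setminus\{i\}$. Let $d \ge 1$ and let $X \subset \mathbb{Z}_k^d$ be a hole in $\mathbb{Z}_k^d$. Then for any distinct elements $x_1,\dots,x_m \in X$, the set $(X\setminus\{x_1,\dots,x_m\})^{\dagger m}$ is a hole in $\mathbb{Z}_k^{d+m}$.
   Context: $\mathbb{Z}_k$ denotes the integers modulo $k$, with elements $0,\dots,k-1$. A copy of $T$ in $\mathbb{Z}_k^e$ is a set $\{x + j e_s : j \in \mathbb{Z}_k,\ j \ne j_0\}$ for some $x \in \mathbb{Z}_k^e$, $s\in\{1,\dots,e\}$ ($e_s$ the $s$-th unit vector), $j_0\in\mathbb{Z}_k$ (a coordinate line minus one point). A set $Y \subset \mathbb{Z}_k^e$ is a hole in $\mathbb{Z}_k^e$ if $\mathbb{Z}_k^e \setminus Y$ is a disjoint union of copies of $T$. For $S \subset \mathbb{Z}_k^e$, define $S^{\dagger} = (S \times \{0\}) \cup \{c_{e+1,e+1}\} \subset \mathbb{Z}_k^{e+1}$, where $c_{e+1,e+1}$ is the point of $\mathbb{Z}_k^{e+1}$ with last coordinate $k-1$ and all other coordinates $0$. For $m\ge1$, $S^{\dagger m}$ denotes the result of $m$ consecutive applications of $\dagger$ to $S$ (each time in the dimension of the current ambient torus), a subset of $\mathbb{Z}_k^{e+m}$. *)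

(* Defs.v *)
From mathcomp Require Import all_boot all_order all_algebra.
Set Implicit Arguments. Unset Strict Implicit. Unset Printing Implicit Defensive.
Import GRing.Theory.
Local Open Scope ring_scope.

(* Points of the torus Z_k^e (to be used with k >= 2). *)
Definition pt (k e : nat) := {ffun 'I_e -> 'Z_k}.

Definition shift (k e : nat) (x : pt k e) (s : 'I_e) (j : 'Z_k) : pt k e :=
  [ffun t => x t + (if t == s then j else 0)].

(* C is a copy of T: a coordinate line minus one point. *)
Definition is_copy (k e : nat) (C : {set pt k e}) : Prop :=
  exists (x : pt k e) (s : 'I_e) (j0 : 'Z_k),
    C = [set shift x s j | j in [pred j : 'Z_k | j != j0]].

Definition is_hole (k e : nat) (Y : {set pt k e}) : Prop :=
  exists P : {set {set pt k e}},
    [/\ (forall C, C \in P -> is_copy C), trivIset P & cover P = ~: Y].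

Definition ext0 (k e : nat) (x : pt k e) : pt k e.+1 :=
  [ffun t => match unlift ord_max t with Some t' => x t' | None => 0 end].

(* c_{e+1,e+1}: last coordinate k-1, others 0 *)
Definition cpt (k e : nat) : pt k e.+1 :=
  [ffun t => if t == ord_max then -1 else 0].

Definition dagger (k e : nat) (S : {set pt k e}) : {set pt k e.+1} :=
  (@ext0 k e @: S) :|: [set cpt k e].

Fixpoint daggern (k e m : nat) (S : {set pt k e}) : {set pt k (m + e)} :=
  match m return {set pt k (m + e)} with
  | 0 => S
  | m'.+1 => dagger (daggern m' S)
  end.

(* Main.v *)
Require Import Defs.
From mathcomp Require Import all_boot all_order all_algebra.
Set Implicit Arguments. Unset Strict Implicit. Unset Printing Implicit Defensive.
Import GRing.Theory.
Local Open Scope ring_scope.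

Definition tileable (k e : nat) (S : {set pt k e}) : Prop :=
  exists P : {set {set pt k e}},
    [/\ (forall C, C \in P -> is_copy C), trivIset P & cover P = S].

Section Tile.
Variables (k e : nat).
Implicit Types (A B : {set pt k e}).

Lemma tileable_copy (C : {set pt k e}) : is_copy C -> tileable C.
Proof.
move=> hC; exists [set C]; split; last by rewrite cover1.
  by move=> D; rewrite inE => /eqP->.
exact: trivIset1.
Qed.

Lemma tileable_U A B : [disjoint A & B] -> tileable A -> tileable B ->
  tileable (A :|: B).
Proof.
move=> dAB [PA [cA tA eA]] [PB [cB tB eB]]; exists (PA :|: PB); split.
- by move=> C /setUP[]; [apply: cA|apply: cB].
- by apply: trivIsetU => //; rewrite eA eB.
- by rewrite /cover bigcup_setU -/(cover PA) -/(cover PB) eA eB.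
Qed.

Lemma tileable_family (I : finType) (D : {set I}) (L : I -> {set pt k e}) :
  (forall i, i \in D -> is_copy (L i)) ->
  (forall i j, i \in D -> j \in D -> i != j -> [disjoint L i & L j]) ->
  tileable (\bigcup_(i in D) L i).
Proof.
move=> hc hd; exists (L @: D); split; last by rewrite cover_imset.
- by move=> C /imsetP[i Di ->]; apply: hc.
- apply/trivIsetP => _ _ /imsetP[i Di ->] /imsetP[j Dj ->] ne.
  apply: hd => //; apply: contraNneq ne => ->; by [].
Qed.
End Tile.

Lemma tileable_imset (k e e' : nat) (f : pt k e -> pt k e') (A : {set pt k e}) :
  injective f -> (forall C, is_copy C -> is_copy (f @: C)) ->
  tileable A -> tileable (f @: A).
Proof.
move=> inj hf [P [cP tP eP]]; exists ((fun C : {set pt k e} => f @: C) @: P); split.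
- by move=> _ /imsetP[C PC ->]; apply: hf; apply: cP.
- apply/trivIsetP => _ _ /imsetP[C PC ->] /imsetP[D PD ->] ne.
  have neCD : C != D by apply: contraNneq ne => ->.
  have := (trivIsetP tP) C D PC PD neCD.
  rewrite -!setI_eq0 => /eqP CD; apply/eqP/setP => x; rewrite !inE.
  apply/negbTE/negP => /andP[/imsetP[a Ca ->] /imsetP[b Db /inj eab]].
  have : a \in C :&: D by rewrite inE Ca eab Db.
  by rewrite CD inE.
- rewrite cover_imset -eP /cover; apply/setP => x; apply/bigcupP/imsetP.
  + by move=> [C PC /imsetP[a Ca ->]]; exists a => //; apply/bigcupP; exists C.
  + by move=> [a /bigcupP[C PC Ca] ->]; exists C => //; apply: imset_f.
Qed.


Section Ix.
Variables (k : nat).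

Definition lay e (x : pt k e) (t : 'Z_k) : pt k e.+1 :=
  [ffun i => if unlift ord_max i is Some i' then x i' else t].
Definition ins e (a : 'Z_k) (x : pt k e) : pt k e.+1 :=
  [ffun i => if unlift ord0 i is Some i' then x i' else a].
Definition dropl e (p : pt k e.+1) : pt k e := [ffun j => p (lift ord_max j)].
Definition dropf e (p : pt k e.+1) : pt k e := [ffun j => p (lift ord0 j)].

Lemma ext0E e (x : pt k e) : ext0 x = lay x 0.
Proof. by []. Qed.

Lemma lay_max e (x : pt k e) t : lay x t ord_max = t.
Proof. by rewrite ffunE unlift_none. Qed.
Lemma lay_lift e (x : pt k e) t j : lay x t (lift ord_max j) = x j.
Proof. by rewrite ffunE liftK. Qed.
Lemma ins_0 e (x : pt k e) a : ins a x ord0 = a.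
Proof. by rewrite ffunE unlift_none. Qed.
Lemma ins_lift e (x : pt k e) a j : ins a x (lift ord0 j) = x j.
Proof. by rewrite ffunE liftK. Qed.

Lemma pt_eql e (p q : pt k e.+1) : p ord_max = q ord_max ->
  (forall j, p (lift ord_max j) = q (lift ord_max j)) -> p = q.
Proof.
move=> h1 h2; apply/ffunP => i; case: (unliftP ord_max i) => [j ->|->] //.
Qed.
Lemma pt_eqf e (p q : pt k e.+1) : p ord0 = q ord0 ->
  (forall j, p (lift ord0 j) = q (lift ord0 j)) -> p = q.
Proof.
move=> h1 h2; apply/ffunP => i; case: (unliftP ord0 i) => [j ->|->] //.
Qed.

Lemma layK e (p : pt k e.+1) : p = lay (dropl p) (p ord_max).
Proof. by apply: pt_eql => [|j]; rewrite ?lay_max ?lay_lift ?ffunE. Qed.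
Lemma insK e (p : pt k e.+1) : p = ins (p ord0) (dropf p).
Proof. by apply: pt_eqf => [|j]; rewrite ?ins_0 ?ins_lift ?ffunE. Qed.

Lemma lay_inj e (x x' : pt k e) t t' : lay x t = lay x' t' -> x = x' /\ t = t'.
Proof.
move=> h; split; last by rewrite -(lay_max x t) h lay_max.
by apply/ffunP => j; rewrite -(lay_lift x t) h lay_lift.
Qed.
Lemma ins_inj e (x x' : pt k e) t t' : ins t x = ins t' x' -> x = x' /\ t = t'.
Proof.
move=> h; split; last by rewrite -(ins_0 x t) h ins_0.
by apply/ffunP => j; rewrite -(ins_lift x t) h ins_lift.
Qed.

Lemma lay_shift e (x : pt k e) s j t :
  lay (shift x s j) t = shift (lay x t) (lift ord_max s) j.
Proof.
apply: pt_eql => [|i]; rewrite !ffunE ?unlift_none ?liftK.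
  by rewrite (negbTE (neq_lift _ _)) addr0.
by rewrite ffunE (inj_eq (@lift_inj _ _)).
Qed.
Lemma ins_shift e (x : pt k e) s j t :
  ins t (shift x s j) = shift (ins t x) (lift ord0 s) j.
Proof.
apply: pt_eqf => [|i]; rewrite !ffunE ?unlift_none ?liftK.
  by rewrite (negbTE (neq_lift _ _)) addr0.
by rewrite ffunE (inj_eq (@lift_inj _ _)).
Qed.
Lemma shift_ins0 e (u : pt k e) c : shift (ins 0 u) ord0 c = ins c u.
Proof.
apply: pt_eqf => [|i]; rewrite !ffunE ?unlift_none ?liftK ?eqxx ?add0r //.
by rewrite eq_sym (negbTE (neq_lift _ _)) addr0.
Qed.

Lemma copy_imset e e' (f : pt k e -> pt k e') (g : 'I_e -> 'I_e') :
  (forall x s j, f (shift x s j) = shift (f x) (g s) j) ->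
  forall C, is_copy C -> is_copy (f @: C).
Proof.
move=> hf C [x [s [j0 ->]]]; exists (f x), (g s), j0.
rewrite -imset_comp; apply: eq_imset => j /=; exact: hf.
Qed.

Lemma lay_ins n (x : pt k n) a t : lay (ins a x) t = ins a (lay x t).
Proof.
apply: pt_eql => [|j].
  rewrite lay_max; have -> : (ord_max : 'I_n.+2) = lift ord0 ord_max by apply: val_inj.
  by rewrite ins_lift lay_max.
rewrite lay_lift; case: (unliftP ord0 j) => [j' ->|->].
  have -> : lift ord_max (lift ord0 j') = lift ord0 (lift ord_max j' : 'I_n.+1).
    by apply: val_inj; rewrite /= /bump /= !add1n ltnS (leqNgt n j') ltn_ord.
  by rewrite !ins_lift lay_lift.
have -> : lift ord_max (ord0 : 'I_n.+1) = ord0 :> 'I_n.+2 by apply: val_inj.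
by rewrite !ins_0.
Qed.
End Ix.


Lemma disjP (T : finType) (A B : {set T}) :
  (forall x, x \in A -> x \in B -> False) -> [disjoint A & B].
Proof.
move=> h; rewrite disjoints_subset; apply/subsetP => x xA; rewrite inE.
by apply/negP => xB; exact: h x xA xB.
Qed.

Section Core.
Variable k : nat.

Lemma m1_neq0 : (-1 : 'Z_k) != 0.
Proof. by rewrite oppr_eq0 oner_neq0. Qed.

Lemma lay_eq e (x x' : pt k e) t t' : (lay x t == lay x' t') = (x == x') && (t == t').
Proof.
apply/eqP/andP => [/lay_inj[-> ->]|[/eqP-> /eqP->]] //.
Qed.
Lemma ins_eq e (x x' : pt k e) t t' : (ins t x == ins t' x') = (x == x') && (t == t').
Proof.
apply/eqP/andP => [/ins_inj[-> ->]|[/eqP-> /eqP->]] //.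
Qed.

Lemma ins_max n (u : pt k n.+1) c : ins c u ord_max = u ord_max.
Proof.
have -> : (ord_max : 'I_n.+2) = lift ord0 ord_max by apply: val_inj.
by rewrite ins_lift.
Qed.



Definition Fset e (y w : pt k e) : {set pt k e.+1} :=
  ([set p : pt k e.+1 | p ord_max != 0] :\ lay w (-1)) :|: [set lay y 0].

Lemma memF e (y w : pt k e) (p : pt k e.+1) : (p \in Fset y w) =
  ((p ord_max != 0) && (p != lay w (-1))) || (p == lay y 0).
Proof. by rewrite !inE andbC. Qed.

Lemma mem_ins_imset e (S : {set pt k e}) a c u :
  (ins c u \in (ins a) @: S) = (c == a) && (u \in S).
Proof.
apply/imsetP/andP => [[z zS /ins_inj[-> ->]]|[/eqP-> uS]] //.
by exists u.
Qed.

Lemma Fset_tile e (y w : pt k e) : tileable (Fset y w).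
Proof.
elim: e y w => [|n IH] y w.
  have e0 : forall x x' : pt k 0, x = x' by move=> x x'; apply/ffunP => -[].
  apply: tileable_copy; exists (lay y 0), ord_max, (-1).
  apply/setP => p; move: (dropl p) (p ord_max) (layK p) => z t ->.
  rewrite memF lay_max !lay_eq (e0 z y) (e0 w y) !eqxx /=.
  apply/idP/imsetP.
    move=> h; exists t; rewrite ?inE.
      by move: h; case: (t =P -1) => [->|//]; rewrite (negbTE m1_neq0).
    apply: pt_eql => [|i]; last by case: i.
    by rewrite lay_max ffunE eqxx lay_max add0r.
  move=> [j]; rewrite inE => nj; move/(congr1 (fun q : pt k 1 => q ord_max)).
  rewrite lay_max ffunE lay_max eqxx add0r => ->.
  by case: (j =P 0) => //= _; rewrite nj.
set y0 := y ord0; set y' := dropf y; set w0 := w ord0; set w' := dropf w.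
have ey : y = ins y0 y' by apply: insK.
have ew : w = ins w0 w' by apply: insK.
pose om (u : pt k n.+1) := if u == lay w' (-1) then w0 else y0.
pose L (u : pt k n.+1) : {set pt k n.+2} :=
  [set shift (ins 0 u) ord0 j | j in [pred j : 'Z_k | j != om u]].
pose D := [set u : pt k n.+1 | u ord_max != 0].
have memL : forall u c v, (ins c v \in L u) = (v == u) && (c != om u).
  move=> u c v; apply/imsetP/andP => [[j]|[/eqP-> nc]].
    by rewrite inE shift_ins0 => nj /ins_inj[-> ->]; rewrite eqxx.
  by exists c; rewrite ?inE ?shift_ins0.
have memH : forall c v, (ins c v \in \bigcup_(u in D) L u) =
    (v ord_max != 0) && (c != om v).
  move=> c v; apply/bigcupP/andP => [[u]|[nv nc]].
    by rewrite inE memL => nu /andP[/eqP-> ->].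
  by exists v; rewrite ?inE // memL eqxx.
have hT : tileable (\bigcup_(u in D) L u).
  apply: tileable_family => [u _|u v _ _ nuv]; first by exists (ins 0 u), ord0, (om u).
  apply: disjP => p /imsetP[j _ ->]; rewrite shift_ins0 memL.
  by rewrite (negbTE nuv).
have hG : tileable (ins y0 @: Fset y' w').
  apply: tileable_imset; last exact: IH.
    by move=> a b /ins_inj[].
  apply: copy_imset => x s j; exact: ins_shift.
have mwm : lay w' (-1) ord_max != 0 by rewrite lay_max m1_neq0.
have mym : lay y' 0 ord_max = 0 by rewrite lay_max.
have -> : Fset y w = (\bigcup_(u in D) L u) :|: (ins y0 @: Fset y' w').
  apply/setP => p; move: (p ord0) (dropf p) (insK p) => c u ->.
  rewrite [in RHS]in_setU memH mem_ins_imset !memF ins_max {1}ew {1}ey !lay_ins !ins_eq /om.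
  case: (u =P lay w' (-1)) => [->|nA].
    by rewrite mwm lay_eq (negbTE m1_neq0) !andbF /= ?orbF.
  case: (u =P lay y' 0) => [->|nB]; first by rewrite mym eqxx /= andbT.
  by case: (c == y0); case: (u ord_max != 0).
apply: tileable_U => //.
apply: disjP => p; move: (p ord0) (dropf p) (insK p) => c u ->.
rewrite memH mem_ins_imset memF /om.
case: (u =P lay w' (-1)) => [->|nA].
  by rewrite lay_eq (negbTE m1_neq0) !andbF /=.
move=> /andP[_ nc] /andP[/eqP ce _]; by rewrite ce eqxx in nc.
Qed.
End Core.


Section Dag.
Variable k : nat.

Lemma cptE e : cpt k e = lay 0 (-1).
Proof.
apply: pt_eql => [|j]; rewrite ?lay_max ?lay_lift ffunE ?eqxx //.
by rewrite eq_sym (negbTE (neq_lift _ _)) ffunE.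
Qed.

Lemma mem_lay_imset e (S : {set pt k e}) s x t :
  (lay x t \in (fun z => lay z s) @: S) = (t == s) && (x \in S).
Proof.
apply/imsetP/andP => [[z zS /lay_inj[-> ->]]|[/eqP-> xS]] //.
by exists x.
Qed.

Lemma mem_dagger e (S : {set pt k e}) x t :
  (lay x t \in dagger S) = ((t == 0) && (x \in S)) || ((x == 0) && (t == -1)).
Proof.
rewrite /dagger in_setU (_ : @ext0 k e = fun z => lay z 0) // mem_lay_imset.
by rewrite inE cptE lay_eq.
Qed.

Lemma hole_dagger e (Y : {set pt k e}) y :
  is_hole Y -> y \in Y -> is_hole (dagger (Y :\ y)).
Proof.
move=> hY yY; suff : tileable (~: dagger (Y :\ y)) by [].
have {}hY : tileable (~: Y) by [].

have -> : ~: dagger (Y :\ y) = ((fun z => lay z 0) @: ~: Y) :|: Fset y 0.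
  apply/setP => p; move: (dropl p) (p ord_max) (layK p) => x t ->.
  rewrite [in RHS]in_setU inE mem_dagger mem_lay_imset memF lay_max !lay_eq !inE.
  case: (t =P 0) => [->|nt] /=.
    rewrite [0 == _]eq_sym (negbTE (@m1_neq0 k)) andbF orbF andbT.
    by case: (x =P y) => [->|]; rewrite ?eqxx ?orbT //= orbF.
  by rewrite andbF orbF.
apply: tileable_U.
- apply: disjP => p /imsetP[z]; rewrite inE => zY ->; rewrite memF lay_max eqxx /=.
  by rewrite lay_eq eqxx andbT => /eqP ezy; rewrite ezy yY in zY.
- apply: tileable_imset => //; first by move=> a b /lay_inj[].
  apply: copy_imset => x s j; exact: lay_shift.
- exact: Fset_tile.
Qed.

Lemma dagger_D1 e (S : {set pt k e}) x : dagger (S :\ x) = dagger S :\ ext0 x.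
Proof.
apply/setP => p; move: (dropl p) (p ord_max) (layK p) => z t ->.
rewrite [in RHS]inE !mem_dagger !inE ext0E lay_eq.
case: (t =P 0) => [->|nt] /=.
  rewrite [0 == _]eq_sym (negbTE (@m1_neq0 k)) !andbF !orbF andbT.
  by case: (z =P x).
by rewrite andbF.
Qed.

Lemma ext0_dagger e (S : {set pt k e}) x : (ext0 x \in dagger S) = (x \in S).
Proof.
by rewrite ext0E mem_dagger eqxx [0 == _]eq_sym (negbTE (@m1_neq0 k)) andbF orbF.
Qed.

Fixpoint extn e m (x : pt k e) : pt k (m + e) :=
  match m return pt k (m + e) with 0 => x | m'.+1 => ext0 (extn m' x) end.

Lemma daggern_D1 e m (S : {set pt k e}) x :
  daggern m (S :\ x) = daggern m S :\ extn m x /\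
  (extn m x \in daggern m S) = (x \in S).
Proof.
elim: m => [|m [IH1 IH2]] //=.
by rewrite IH1 dagger_D1 ext0_dagger IH2.
Qed.

Lemma gen d (X : {set pt k d}) (xs : seq (pt k d)) :
  is_hole X -> uniq xs -> (forall x, x \in xs -> x \in X) ->
  is_hole (daggern (size xs) (X :\: [set x in xs])).
Proof.
move=> hX; elim/last_ind: xs => [|xs a IH].
  move=> _ _ /=; have -> : X :\: [set x in [::]] = X.
    by apply/setP => x; rewrite !inE in_nil.
  exact: hX.
rewrite rcons_uniq => /andP[axs uxs] sub.
have -> : X :\: [set x in rcons xs a] = (X :\: [set x in xs]) :\ a.
  by apply/setP => x; rewrite !inE mem_rcons in_cons negb_or andbA.
rewrite size_rcons /=.
have [-> h2] := daggern_D1 (size xs) (X :\: [set x in xs]) a.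
apply: hole_dagger.
  by apply: IH => // x xin; apply: sub; rewrite mem_rcons in_cons xin orbT.
by rewrite h2 !inE axs sub // mem_rcons mem_head.
Qed.
End Dag.

Theorem corollary6 (k i d : nat) (X : {set pt k d}) (xs : seq (pt k d)) :
  (3 <= k)%N -> (2 <= i <= k - 1)%N -> (1 <= d)%N ->
  is_hole X ->
  uniq xs -> (forall x, x \in xs -> x \in X) -> (1 <= size xs)%N ->
  is_hole (daggern (size xs) (X :\: [set x in xs])).
Proof. by move=> _ _ _ hX u s _; apply: gen. Qed.
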